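(* Let $C_{\vec B}$ be a Cantor set with CDF $F_{\vec B}$. For every irrational $x\in[0,1]$, $x\in C_{\vec B}$ if and only if $F_{\vec B}(x)$ is irrational.
   Context: A Cantor set is specified by a binary digit vector $\vec B=(b_0,\dots,b_{N-1})\in\{0,1\}^N$ with $N\ge3$ and $2\le\|\vec B\|:=\sum_i b_i\le N-1$; its digit set is $D=\{i:b_i=1\}$. With $\phi_d(x)=(x+d)/N$ for $d\in D$, $C_{\vec B}\subset[0,1]$ is the unique nonempty compact set with $C_{\vec B}=\bigcup_{d\in D}\phi_d(C_{\vec B})$, and $\mu_{\vec B}$ is the unique Borel probability measure with $\mu_{\vec B}=\frac{1}{\|\vec B\|}\sum_{d\in D}\mu_{\vec B}\circ\phi_d^{-1}$. The CDF is $F_{\vec B}(x)=\mu_{\vec B}([0,x])$, $x\in[0,1]$. *)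

(* Defs.v *)
From HB Require Import structures.
From mathcomp Require Import all_boot all_order all_algebra.
From mathcomp Require Import all_classical all_reals all_analysis.
Set Implicit Arguments. Unset Strict Implicit. Unset Printing Implicit Defensive.
Import Order.TTheory GRing.Theory Num.Theory numFieldNormedType.Exports.
Local Open Scope classical_set_scope.
Local Open Scope ring_scope.

Definition digit_norm (N : nat) (B : 'I_N -> bool) : nat := #|[pred i | B i]|.

Definition valid_digits (N : nat) (B : 'I_N -> bool) : Prop :=
  (3 <= N)%N /\ (2 <= digit_norm B)%N /\ (digit_norm B <= N.-1)%N.

Definition cantor_map (R : realType) (N : nat) (d : 'I_N) (x : R) : R :=
  (x + (d : nat)%:R) / N%:R.

(* C is a nonempty compact set with C = \bigcup_{d in D} phi_d(C)
   (the defining property of C_B; it has a unique solution). *)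
Definition is_cantor_set (R : realType) (N : nat) (B : 'I_N -> bool)
  (C : set R) : Prop :=
  [/\ C !=set0, compact C &
      C = \bigcup_(d in [set d : 'I_N | B d]) (cantor_map d @` C)].

(* mu is a Borel probability measure with
   mu = (1/||B||) sum_{d in D} mu o phi_d^{-1}
   (the defining property of mu_B; it has a unique solution). *)
Definition is_cantor_measure (R : realType) (N : nat) (B : 'I_N -> bool)
  (mu : probability R R) : Prop :=
  forall A : set R, measurable A ->
    (mu A = (((digit_norm B)%:R)^-1)%:E *
            \sum_(d < N | B d) mu (cantor_map d @^-1` A))%E.

Definition cantor_cdf (R : realType) (mu : probability R R) (x : R) : R :=
  fine (mu `[0, x]%classic).

(* Main.v *)
Require Import Defs.
From HB Require Import structures.
From mathcomp Require Import all_boot all_order all_algebra.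
From mathcomp Require Import all_classical all_reals all_analysis.
From mathcomp Require Import ring lra zify.
Set Implicit Arguments. Unset Strict Implicit. Unset Printing Implicit Defensive.
Import Order.TTheory GRing.Theory Num.Theory numFieldNormedType.Exports.
Local Open Scope classical_set_scope.
Local Open Scope ring_scope.



Section Rat.
Variable R : realType.

Lemma ratP (x : R) : rational x <-> exists q : rat, x = ratr q.
Proof. by split=> [[q _ <-]|[q ->]]; [exists q|exists q]. Qed.

Lemma rationalD (x y : R) : rational x -> rational y -> rational (x + y).
Proof. by move=> /ratP[p ->] /ratP[q ->]; apply/ratP; exists (p + q); rewrite rmorphD. Qed.

Lemma rationalM (x y : R) : rational x -> rational y -> rational (x * y).
Proof. by move=> /ratP[p ->] /ratP[q ->]; apply/ratP; exists (p * q); rewrite rmorphM. Qed.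

Lemma rationalN (x : R) : rational x -> rational (- x).
Proof. by move=> /ratP[p ->]; apply/ratP; exists (- p); rewrite rmorphN. Qed.

Lemma rationalV (x : R) : rational x -> rational (x^-1).
Proof. by move=> /ratP[p ->]; apply/ratP; exists (p^-1); rewrite fmorphV. Qed.

Lemma rational_nat (n : nat) : rational (n%:R : R).
Proof. by apply/ratP; exists n%:R; rewrite rmorph_nat. Qed.

Lemma rational_int (z : int) : rational (z%:~R : R).
Proof. by apply/ratP; exists z%:~R; rewrite rmorph_int. Qed.

End Rat.

Lemma ratP2 (R : realType) (x : R) : rational x ->
  exists (a : int) (b : nat), (0 < b)%N /\ x * b%:R = a%:~R.
Proof.
move=> /ratP[q ->]; exists (numq q), `|denq q|%N; split.
  by rewrite absz_gt0 gt_eqF // denq_gt0.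
rewrite -{1}(divq_num_den q) fmorph_div /= !ratr_int.
have -> : (`|denq q|%N)%:R = (denq q)%:~R :> R.
  by rewrite natr_absz ger0_norm // ltW // denq_gt0.
by rewrite divfK // intr_eq0 gt_eqF // denq_gt0.
Qed.



Section Dyn.
Variables (R : realType) (N : nat).
Hypothesis N2 : (2 <= N)%N.

Definition good (y : R) := irrational y /\ 0 < y < 1.
Definition dig (y : R) : nat := Num.trunc (N%:R * y).
Definition T (y : R) : R := N%:R * y - (dig y)%:R.

Lemma N_gt0 : 0 < N%:R :> R.
Proof. by rewrite ltr0n; apply: leq_trans N2. Qed.

Lemma good_T y : good y ->
  [/\ good (T y), (dig y < N)%N & (dig y)%:R < N%:R * y < (dig y).+1%:R].
Proof.
move=> [yi /andP[y0 y1]].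
have Ny0 : 0 <= N%:R * y by rewrite mulr_ge0 // ltW.
have /andP[h1 h2] := truncn_itv Ny0.
have hne : (dig y)%:R != N%:R * y.
  apply/negP => /eqP e; apply: yi.
  have -> : y = (dig y)%:R / N%:R by rewrite e mulrAC divff ?mul1r // gt_eqF // N_gt0.
  by apply: rationalM; [exact: rational_nat|apply: rationalV; exact: rational_nat].
have h1' : (dig y)%:R < N%:R * y by rewrite lt_neqAle hne h1.
have dN : (dig y < N)%N.
  by rewrite /dig truncn_lt_nat // -{2}(mulr1 N%:R) ltr_pM2l // N_gt0.
split => //; last by rewrite h1' h2.
split; last first.
  rewrite /T subr_gt0 h1' /= ltrBlDl; by rewrite -natr1 in h2.
move=> Tr; apply: yi.
have -> : y = (T y + (dig y)%:R) / N%:R.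
  by rewrite /T subrK mulrC mulKf // gt_eqF // N_gt0.
apply: rationalM; first by apply: rationalD => //; exact: rational_nat.
by apply: rationalV; exact: rational_nat.
Qed.

Lemma good_iter n y : good y -> good (iter n T y).
Proof. by elim: n => [//|n IH] /IH /good_T []. Qed.

Lemma iter_T_eq n y : exists m : nat, iter n T y = (N ^ n)%:R * y - m%:R.
Proof.
elim: n => [|n [m IH]]; first by exists 0%N; rewrite /= mul1r subr0.
exists (N * m + dig (iter n T y))%N.
by rewrite /= {1}/T IH natrD !natrM expnSr natrM; ring.
Qed.

Lemma periodic_rational k y : (0 < k)%N -> iter k T y = y -> rational y.
Proof.
move=> k0 e; have [m hm] := iter_T_eq k y.
have Nk : 1 < (N ^ k)%:R :> R.
  by rewrite ltr1n (leq_ltn_trans k0 (ltn_expl k N2)).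
have hnz : (N ^ k)%:R - 1 != 0 :> R by rewrite subr_eq0 gt_eqF.
have h : y * ((N ^ k)%:R - 1) = m%:R.
  rewrite e in hm; rewrite mulrBr mulr1 {2}hm; ring.
have -> : y = m%:R / ((N ^ k)%:R - 1) by rewrite -h mulfK.
apply: rationalM; first exact: rational_nat.
by apply: rationalV; apply: rationalD; [exact: rational_nat|apply: rationalN; exact: rational_int 1].
Qed.

End Dyn.



Section Dyn2.
Variables (R : realType) (N : nat) (B : 'I_N -> bool) (G : R -> R).
Hypothesis N2 : (2 <= N)%N.

Definition Bn (n : nat) : bool := [exists e : 'I_N, (val e == n) && B e].
Definition rk (n : nat) : nat := #|[pred e : 'I_N | B e && (val e < n)%N]|.
Let K := digit_norm B.
Hypothesis K1 : (0 < K)%N.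
Hypothesis G01 : forall y, 0 <= G y <= 1.
Hypothesis Grec : forall y, good y ->
  G y = ((rk (dig N y))%:R + (Bn (dig N y))%:R * G (T N y)) / K%:R.

Definition allD (y : R) := forall n, Bn (dig N (iter n (T N) y)).

Lemma BnP n : Bn n -> exists2 a : 'I_N, val a = n & B a.
Proof. by move=> /existsP[a /andP[/eqP <- Ba]]; exists a. Qed.

Lemma BnE (a : 'I_N) : Bn a = B a.
Proof.
apply/idP/idP => [/BnP[b /val_inj -> //]|Ba].
by apply/existsP; exists a; rewrite eqxx.
Qed.

Lemma K_gt0 : 0 < K%:R :> R. Proof. by rewrite ltr0n. Qed.

Lemma rk1 (a : 'I_N) : B a -> ((rk a).+1 <= K)%N.
Proof.
move=> Ba; rewrite /K /digit_norm /rk.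
have := cardU1 a [pred e : 'I_N | B e && (val e < a)%N].
rewrite inE /= ltnn andbF /= add1n => <-.
apply: subset_leq_card. apply/fintype.subsetP => x; rewrite !inE.
by case/orP => [/eqP -> //|/andP[]].
Qed.

Lemma rk2 (a e : 'I_N) : B a -> B e -> (a < e)%N -> ((rk a).+2 <= K)%N.
Proof.
move=> Ba Be ae; rewrite /K /digit_norm /rk.
have := cardU1 a [pred e : 'I_N | B e && (val e < a)%N].
rewrite inE /= ltnn andbF /= add1n => <-.
have := cardU1 e [predU1 a & [pred e : 'I_N | B e && (val e < a)%N]].
rewrite !inE /= -val_eqE /= gtn_eqF //= ltnNge ltnW //= andbF /= add1n => <-.
apply: subset_leq_card; apply/fintype.subsetP => x; rewrite !inE.
by case/orP => [/eqP -> //|/orP[/eqP -> //|/andP[]]].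
Qed.

Lemma rk3 (a : 'I_N) b : B a -> (a < b)%N -> ((rk a).+1 <= rk b)%N.
Proof.
move=> Ba ab; rewrite /rk.
have := cardU1 a [pred e : 'I_N | B e && (val e < a)%N].
rewrite inE /= ltnn andbF /= add1n => <-.
apply: subset_leq_card; apply/fintype.subsetP => x; rewrite !inE.
case/orP => [/eqP -> //|/andP[-> /= xa]]; first by rewrite Ba.
exact: ltn_trans xa ab.
Qed.

Lemma Grec1 y : good y -> Bn (dig N y) -> G y = ((rk (dig N y))%:R + G (T N y)) / K%:R.
Proof. by move=> gy By; rewrite Grec // By mul1r. Qed.

Lemma G_T y : good y -> Bn (dig N y) -> G (T N y) = K%:R * G y - (rk (dig N y))%:R.
Proof.
move=> gy By; rewrite [in RHS](Grec1 gy By) mulrC divfK ?gt_eqF ?K_gt0 //.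
by rewrite addrC addKr.
Qed.

Lemma pow_bound (d : R) : (forall n, (N ^ n)%:R * d <= 1) -> d <= 0.
Proof.
move=> H; rewrite leNgt; apply/negP => d0.
pose n := (Num.trunc (d^-1)).+1.
have h1 : d^-1 < n%:R by exact: truncnS_gt.
have h2 : (n < N ^ n)%N := ltn_expl n N2.
have := H n; apply/negP; rewrite -ltNge.
have h3 : 1 < n%:R * d by rewrite -ltr_pdivrMr // div1r.
apply: (lt_le_trans h3); rewrite ler_pM2r //; rewrite ler_nat; exact: ltnW.
Qed.


Lemma allD_T y : allD y -> allD (T N y).
Proof. by move=> ay n; have := ay n.+1; rewrite iterSr. Qed.

Lemma exists_bigger y : good y -> allD y ->
  exists n, exists2 e : 'I_N, B e & (dig N (iter n (T N) y) < e)%N.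
Proof.
move=> gy ay; apply: contrapT => H.
have H' : forall n (e : 'I_N), B e -> (e <= dig N (iter n (T N) y))%N.
  move=> n e Be; rewrite leqNgt; apply/negP => lt; by apply: H; exists n; exists e.
have dc : forall n, dig N (iter n (T N) y) = dig N y.
  move=> n; have [a ea Ba] := BnP (ay n); have [a0 ea0 Ba0] := BnP (ay 0%N).
  apply/eqP; rewrite eqn_leq; apply/andP; split.
    by rewrite -ea; have := H' 0%N a Ba; rewrite /= -ea0.
  by rewrite -ea0 /=; exact: H'.
have [_ cN _] := good_T N2 gy.
set c := dig N y in dc cN.
have N1 : 0 < N%:R - 1 :> R by rewrite subr_gt0 ltr1n.
pose p : R := c%:R / (N%:R - 1).
have hpc : N%:R * p - p = c%:R.
  by rewrite -{2}(mul1r p) -mulrBl mulrC divfK // gt_eqF.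
have p0 : 0 <= p by rewrite divr_ge0 // ltW.
have p1 : p <= 1.
  by rewrite ler_pdivrMr // mul1r lerBrDr natr1 ler_nat.
have hp : forall n, iter n (T N) y - p = (N ^ n)%:R * (y - p).
  elim=> [|n IH]; first by rewrite mul1r.
  rewrite iterS {1}/T dc -[iter n (T N) y](subrK p) IH expnSr natrM -hpc; ring.
have : `|y - p| <= 0.
  apply: pow_bound => n; rewrite -normr_nat -normrM -hp.
  have [_ /andP[i0 i1]] := good_iter N2 n gy.
  rewrite ler_norml; apply/andP; split; lra.
rewrite normr_le0 subr_eq0 => /eqP yp.
case: gy => yi _; apply: yi; rewrite yp.
apply: rationalM; first exact: rational_nat.
apply: rationalV; apply: rationalD; first exact: rational_nat.
by apply: rationalN; exact: rational_int 1.
Qed.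

Lemma G_lt1 y : good y -> allD y -> G y < 1.
Proof.
move=> gy ay; have [n [e Be lt]] := exists_bigger gy ay.
elim: n y gy ay lt => [|n IH] y gy ay lt.
  have [a ea Ba] := BnP (ay 0%N).
  rewrite Grec1 //; last exact: (ay 0%N).
  rewrite ltr_pdivrMr ?K_gt0 // mul1r.
  have : ((rk (dig N y)).+2)%:R <= K%:R :> R.
    by rewrite ler_nat -ea; apply: rk2 Be _ => //; rewrite ea.
  rewrite -addn2 natrD; have := G01 (T N y); move=> /andP[_ ?]; lra.
have [gT _ _] := good_T N2 gy.
have hT := IH (T N y) gT (allD_T ay) ltac:(by rewrite -iterSr).
have [a ea Ba] := BnP (ay 0%N).
rewrite Grec1 //; last exact: (ay 0%N).
rewrite ltr_pdivrMr ?K_gt0 // mul1r.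
have : ((rk (dig N y)).+1)%:R <= K%:R :> R.
  by rewrite ler_nat -ea; apply: rk1.
rewrite -addn1 natrD; lra.
Qed.


Lemma G_mono n y z : good y -> good z -> allD y -> allD z -> y < z ->
  1 < (N ^ n)%:R * (z - y) -> G y < G z.
Proof.
elim: n y z => [|n IH] y z gy gz ay az yz.
  rewrite mul1r; case: gy => _ /andP[y0 y1]; case: gz => _ /andP[z0 z1]; lra.
move=> hn.
have [gTy _ /andP[hy1 hy2]] := good_T N2 gy.
have [gTz _ /andP[hz1 hz2]] := good_T N2 gz.
have Nyz : N%:R * y < N%:R * z by rewrite ltr_pM2l // N_gt0.
have ab : (dig N y <= dig N z)%N.
  by rewrite -ltnS -(ltr_nat R); apply: lt_trans hy1 (lt_trans Nyz hz2).
rewrite (Grec1 gy (ay 0%N)) (Grec1 gz (az 0%N)).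
rewrite ltr_pM2r ?invr_gt0 ?K_gt0 //.
case: (ltngtP (dig N y) (dig N z)) ab => // [lt|eq] _.
  have [a ea Ba] := BnP (ay 0%N).
  have := rk3 Ba (_ : (a < dig N z)%N); rewrite ea => /(_ lt).
  rewrite -(ler_nat R) -addn1 natrD => hr.
  have h1 := G_lt1 gTy (allD_T ay).
  have /andP[h2 _] := G01 (T N z).
  lra.
rewrite eq ltrD2l; apply: IH => //; [exact: allD_T|exact: allD_T| |].
  by rewrite /T eq ltrD2r.
suff -> : T N z - T N y = N%:R * (z - y) by rewrite mulrA -natrM -expnSr.
by rewrite /T eq; ring.
Qed.

Lemma G_lt y z : good y -> good z -> allD y -> allD z -> y < z -> G y < G z.
Proof.
move=> gy gz ay az yz.
have [n hn] : exists n, 1 < (N ^ n)%:R * (z - y).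
  apply: contrapT => H.
  have : z - y <= 0.
    apply: pow_bound => n; rewrite leNgt; apply/negP => h; apply: H; by exists n.
  by rewrite subr_le0 leNgt yz.
exact: G_mono hn.
Qed.

Lemma G_inj y z : good y -> good z -> allD y -> allD z -> G y = G z -> y = z.
Proof.
move=> gy gz ay az e.
case: (ltgtP y z) => // h.
  by have := G_lt gy gz ay az h; rewrite e ltxx.
by have := G_lt gz gy az ay h; rewrite e ltxx.
Qed.

Lemma allD_iter n y : allD y -> allD (iter n (T N) y).
Proof. by move=> ay k; rewrite -iterD; apply: ay. Qed.

Lemma allD_irrational x : good x -> allD x -> irrational (G x).
Proof.
move=> gx ax /ratP2[p [s [s0 hs]]].
have integ : forall n, exists z : int, G (iter n (T N) x) * s%:R = z%:~R.
  elim=> [|n [z hz]]; first by exists p.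
  exists (z * K%:R - (s * rk (dig N (iter n (T N) x)))%:R)%R.
  have gi := good_iter N2 n gx; have bi := ax n; rewrite iterS G_T //.
  by rewrite intrB intrM !mulrz_nat -hz natrM; ring.
pose h n := Num.trunc (G (iter n (T N) x) * s%:R).
have hh : forall n, (h n)%:R = G (iter n (T N) x) * s%:R /\ (h n <= s)%N.
  move=> n; have [z hz] := integ n.
  have /andP[g0 g1] := G01 (iter n (T N) x).
  have z0 : (0 <= z)%R.
    by rewrite -(ler0z R) -hz mulr_ge0.
  have hz' : G (iter n (T N) x) * s%:R = (`|z|%N)%:R.
    by rewrite hz natr_absz ger0_norm.
  rewrite /h hz' natrK; split => //.
  by rewrite -(ler_nat R) -hz' ler_piMl.
pose f (i : 'I_s.+2) : 'I_s.+1 := inord (h i).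
have ninj : ~ injective f by move/leq_card; rewrite !card_ord ltnn.
have [i [j [fij ij]]] : exists i j, f i = f j /\ i <> j.
  apply: contrapT => H; apply: ninj => i j fij; apply: contrapT => nij.
  by apply: H; exists i, j.
have hij : h i = h j.
  have hi := proj2 (hh i); have hj := proj2 (hh j).
  by move: fij => /(congr1 (@nat_of_ord _)); rewrite /f !inordK // ltnS.
have Gij : G (iter i (T N) x) = G (iter j (T N) x).
  have sz : s%:R != 0 :> R by rewrite pnatr_eq0 -lt0n.
  apply: (mulIf sz); by rewrite -(proj1 (hh i)) -(proj1 (hh j)) hij.
have xij := G_inj (good_iter N2 i gx) (good_iter N2 j gx) (allD_iter i ax) (allD_iter j ax) Gij.
have [g _] := good_iter N2 i gx.
have [g' _] := good_iter N2 j gx.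
have g0 : ~ rational (iter i (T N) x) := g.
have g0' : ~ rational (iter j (T N) x) := g'.
have ij' : (val i != val j) by apply/negP => /eqP /val_inj.
case: (ltngtP i j) ij' => // lt _.
  apply: g0; apply: (periodic_rational N2 (k := (j - i)%N)); first by rewrite subn_gt0.
  by rewrite -iterD subnK ?xij // ltnW.
apply: g0'; apply: (periodic_rational N2 (k := (i - j)%N)); first by rewrite subn_gt0.
by rewrite -iterD subnK ?xij // ltnW.
Qed.

Lemma notallD_rational n x : good x -> ~~ Bn (dig N (iter n (T N) x)) -> rational (G x).
Proof.
elim: n x => [|n IH] x gx hn.
  rewrite Grec //= (negbTE hn) mul0r addr0.
  by apply: rationalM; [exact: rational_nat|apply: rationalV; exact: rational_nat].
have [gT _ _] := good_T N2 gx.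
rewrite Grec //; apply: rationalM; last by apply: rationalV; exact: rational_nat.
apply: rationalD; first exact: rational_nat.
apply: rationalM; first exact: rational_nat.
by apply: IH; rewrite -?iterSr.
Qed.

Lemma dyn_main x : good x -> (allD x <-> irrational (G x)).
Proof.
move=> gx; split; first exact: allD_irrational.
move=> hi n; apply: contrapT => /negP hn; apply: hi.
exact: notallD_rational hn.
Qed.

End Dyn2.



Section CSet.
Variables (R : realType) (N : nat) (B : 'I_N -> bool) (C : set R).
Hypothesis N2 : (2 <= N)%N.
Hypothesis hC : is_cantor_set B C.

Lemma C_inv c : C c -> exists2 d : 'I_N, B d & exists2 c', C c' & c = (c' + (d : nat)%:R) / N%:R.
Proof.
case: hC => _ _ e; move=> Cc; move: Cc; rewrite {1}e => -[d /= Bd [c' Cc' <-]].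
by exists d => //; exists c'.
Qed.

Lemma C_fwd (d : 'I_N) c : B d -> C c -> C ((c + (d : nat)%:R) / N%:R).
Proof.
case: hC => _ _ e Bd Cc; rewrite e; exists d => //; by exists c.
Qed.

Lemma C_bound : exists2 M : R, 0 < M & forall c, C c -> `|c| <= M.
Proof.
case: hC => _ cC _; have [M [_ hM]] := compact_bounded cC.
exists (`|M| + 1); first by rewrite ltr_wpDl.
move=> c Cc; apply: le_trans (hM (`|M| + 1) _ c Cc) _ => //.
by apply: (le_lt_trans (ler_norm M)); rewrite ltrDl.
Qed.

Lemma C_le1 c : C c -> c <= 1.
Proof.
move=> Cc; rewrite leNgt; apply/negP => c1.
have [M M0 hM] := C_bound.
have hN := N_gt0 R N2.
have key : forall n, exists2 c', C c' & (N ^ n)%:R * (c - 1) <= c' - 1.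
  elim=> [|n [c' Cc' h]]; first by exists c => //; rewrite mul1r.
  have [d Bd [c'' Cc'' e]] := C_inv Cc'.
  exists c'' => //.
  have hd : (d : nat)%:R <= N%:R - 1 :> R.
    by rewrite lerBrDr natr1 ler_nat.
  have -> : c'' = N%:R * c' - (d : nat)%:R.
    by rewrite e mulrC divfK ?gt_eqF // addrK.
  rewrite expnSr natrM.
  have h1 : 0 <= c' - 1 by apply: le_trans h; rewrite mulr_ge0 // subr_ge0 ltW.
  have h2 : 0 <= (N ^ n)%:R * (c - 1) by rewrite mulr_ge0 // subr_ge0 ltW.
  nra.
have : (c - 1) / M <= 0.
  apply: (pow_bound N2) => n; have [c' Cc' h] := key n.
  rewrite mulrA ler_pdivrMr // mul1r; apply: (le_trans h).
  have := hM _ Cc'; have := ler_norm c'; lra.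
by rewrite pmulr_lle0 ?invr_gt0 // subr_le0 leNgt c1.
Qed.

Lemma C_ge0 c : C c -> 0 <= c.
Proof.
move=> Cc; rewrite leNgt; apply/negP => c0.
have [M M0 hM] := C_bound.
have hN := N_gt0 R N2.
have key : forall n, exists2 c', C c' & c' <= (N ^ n)%:R * c.
  elim=> [|n [c' Cc' h]]; first by exists c => //; rewrite mul1r.
  have [d Bd [c'' Cc'' e]] := C_inv Cc'.
  exists c'' => //.
  have hd : 0 <= (d : nat)%:R :> R by [].
  have -> : c'' = N%:R * c' - (d : nat)%:R.
    by rewrite e mulrC divfK ?gt_eqF // addrK.
  rewrite expnSr natrM.
  have h1 : c' <= 0 by exact: (le_trans h (mulr_ge0_le0 (ler0n _ _) (ltW c0))).
  nra.
have : (- c) / M <= 0.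
  apply: (pow_bound N2) => n; have [c' Cc' h] := key n.
  rewrite mulrA ler_pdivrMr // mul1r mulrN; rewrite lerNl.
  apply: (le_trans _ h).
  have := hM _ Cc'; have := ler_normr c'; have := ler_norm (- c'); rewrite normrN; lra.
by rewrite pmulr_lle0 ?invr_gt0 // oppr_le0 leNgt c0.
Qed.


Lemma C_step y : good y -> C y -> Bn B (dig N y) /\ C (T N y).
Proof.
move=> gy Cy; have [d Bd [c Cc e]] := C_inv Cy.
have hN := N_gt0 R N2.
have c0 := C_ge0 Cc; have c1 := C_le1 Cc.
have Ny : N%:R * y = c + (d : nat)%:R by rewrite e mulrC divfK ?gt_eqF.
have c1' : c < 1.
  rewrite lt_neqAle c1 andbT; apply/negP => /eqP c1e.
  case: gy => yi _; apply: yi.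
  have -> : y = (c + (d : nat)%:R) / N%:R by [].
  rewrite c1e; apply: rationalM; first by apply: rationalD; [exact: rational_int 1|exact: rational_nat].
  by apply: rationalV; exact: rational_nat.
have dg : dig N y = d.
  rewrite /dig Ny; apply: truncn_def; rewrite -natr1; apply/andP; split; lra.
split; first by rewrite dg BnE.
by rewrite /T Ny dg addrK.
Qed.

Lemma C_approx n y : good y -> allD B y -> exists2 c, C c & (N ^ n)%:R * `|y - c| <= 1.
Proof.
have hN := N_gt0 R N2.
elim: n y => [|n IH] y gy ay.
  case: hC => -[c Cc] _ _; exists c => //; rewrite mul1r.
  have := C_ge0 Cc; have := C_le1 Cc; case: gy => _ /andP[y0 y1].
  rewrite ler_norml; move=> *; apply/andP; split; lra.
have [gT _ _] := good_T N2 gy.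
have [c Cc h] := IH (T N y) gT (allD_T ay).
have [a ea Ba] := BnP (ay 0%N).
exists ((c + (a : nat)%:R) / N%:R); first exact: C_fwd.
have -> : y - (c + (a : nat)%:R) / N%:R = (T N y - c) / N%:R.
  by rewrite /T ea /=; field; rewrite gt_eqF.
rewrite normrM normfV (gtr0_norm hN) expnSr natrM.
have -> : (N ^ n)%:R * N%:R * (`|T N y - c| / N%:R) = (N ^ n)%:R * `|T N y - c| :> R.
  by field; rewrite gt_eqF.
exact: h.
Qed.

Lemma C_back y : good y -> allD B y -> C y.
Proof.
move=> gy ay.
have cC : closed C by case: hC => _ cC _; apply: compact_closed => //; exact: Rhausdorff.
apply: cC => U /nbhs_ballP [e /= e0 hU].
have [n hn] : exists n, 1 < (N ^ n)%:R * e.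
  apply: contrapT => H.
  have : e <= 0.
    apply: (pow_bound N2) => n; rewrite leNgt; apply/negP => h; apply: H; by exists n.
  by rewrite leNgt e0.
have [c Cc hc] := C_approx n gy ay.
exists c; split => //; apply: hU.
rewrite /ball /= -(ltr_pM2l (_ : 0 < (N ^ n)%:R :> R)); last first.
  by rewrite ltr0n expn_gt0 (ltnW N2).
lra.
Qed.

Lemma C_iff y : good y -> (C y <-> allD B y).
Proof.
move=> gy; split; last exact: C_back.
move=> Cy n; elim: n y gy Cy => [|n IH] y gy Cy.
  exact: (proj1 (C_step gy Cy)).
rewrite iterSr; have [gT _ _] := good_T N2 gy.
exact: IH gT (proj2 (C_step gy Cy)).
Qed.

End CSet.



Section Meas.
Variables (R : realType) (N : nat) (B : 'I_N -> bool) (mu : probability R R).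
Hypothesis hv : valid_digits B.
Hypothesis hmu : is_cantor_measure B mu.
Let K := digit_norm B.

Definition m (A : set R) : R := fine (mu A).

Lemma mE A : measurable A -> mu A = (m A)%:E.
Proof. by move=> mA; rewrite /m fineK // fin_num_measure. Qed.

Lemma m_ge0 A : measurable A -> 0 <= m A.
Proof. by move=> mA; rewrite -lee_fin -mE. Qed.

Lemma m_le1 A : measurable A -> m A <= 1.
Proof. by move=> mA; rewrite -lee_fin -mE // probability_le1. Qed.

Lemma m_le A B' : measurable A -> measurable B' -> A `<=` B' -> m A <= m B'.
Proof. by move=> mA mB AB; rewrite -lee_fin -!mE // le_measure // inE. Qed.

Lemma m_add A B' : measurable A -> measurable B' -> A `&` B' = set0 ->
  m (A `|` B') = m A + m B'.
Proof.
move=> mA mB AB; apply/eqP; rewrite -eqe -mE; last exact: measurableU.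
by rewrite measureU // EFinD -!mE.
Qed.

Lemma m_setT : m setT = 1.
Proof. by rewrite /m probability_setT. Qed.

Lemma m_rec A : measurable A -> (forall d : 'I_N, measurable (cantor_map d @^-1` A)) ->
  m A * K%:R = \sum_(d < N | B d) m (cantor_map d @^-1` A).
Proof.
move=> mA mpre; have := hmu mA.
rewrite mE // (eq_bigr (fun d => (m (cantor_map d @^-1` A))%:E)); last by move=> d _; rewrite mE.
rewrite sumEFin -EFinM => -[->].
have K0 : K%:R != 0 :> R by case: hv => _ [h _]; rewrite pnatr_eq0 -lt0n; apply: leq_trans h.
by rewrite mulrAC mulVf // mul1r.
Qed.


Lemma N3 : (3 <= N)%N. Proof. by case: hv. Qed.
Lemma N2' : (2 <= N)%N. Proof. exact: leq_trans N3. Qed.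
Lemma K2 : (2 <= K)%N. Proof. by case: hv => _ []. Qed.
Let hN := N_gt0 R N2'.

Definition Le (x : R) := [set z : R | z <= x].
Definition Lt (x : R) := [set z : R | z < x].

Lemma mLe x : measurable (Le x).
Proof. by rewrite /Le -set_itvNyc; exact: measurable_itv. Qed.
Lemma mLt x : measurable (Lt x).
Proof. by rewrite /Lt -set_itvNyo; exact: measurable_itv. Qed.

Lemma pre_Le (d : 'I_N) x : cantor_map d @^-1` Le x = Le (N%:R * x - (d : nat)%:R).
Proof.
rewrite /Le /preimage /cantor_map; apply/seteqP; split => z /=;
  rewrite ler_pdivrMr // => h; lra.
Qed.

Lemma pre_Lt (d : 'I_N) x : cantor_map d @^-1` Lt x = Lt (N%:R * x - (d : nat)%:R).
Proof.
rewrite /Lt /preimage /cantor_map; apply/seteqP; split => z /=;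
  rewrite ltr_pdivrMr // => h; lra.
Qed.

Definition G x := m (Le x).
Definition H x := m (Lt x).

Lemma G_rec x : G x * K%:R = \sum_(d < N | B d) G (N%:R * x - (d : nat)%:R).
Proof.
rewrite /G m_rec; last by move=> d; rewrite pre_Le; exact: mLe.
  by apply: eq_bigr => d _; rewrite pre_Le.
exact: mLe.
Qed.

Lemma H_rec x : H x * K%:R = \sum_(d < N | B d) H (N%:R * x - (d : nat)%:R).
Proof.
rewrite /H m_rec; last by move=> d; rewrite pre_Lt; exact: mLt.
  by apply: eq_bigr => d _; rewrite pre_Lt.
exact: mLt.
Qed.

Lemma Gmono x y : x <= y -> G x <= G y.
Proof. move=> xy; apply: m_le; [exact: mLe|exact: mLe|move=> z /= zx; exact: le_trans zx xy]. Qed.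
Lemma Hmono x y : x <= y -> H x <= H y.
Proof. move=> xy; apply: m_le; [exact: mLt|exact: mLt|move=> z /= zx; exact: lt_le_trans zx xy]. Qed.
Lemma G01 x : 0 <= G x <= 1.
Proof. by rewrite m_ge0 ?m_le1 //; exact: mLe. Qed.
Lemma H01 x : 0 <= H x <= 1.
Proof. by rewrite m_ge0 ?m_le1 //; exact: mLt. Qed.

Lemma sum_const (c : R) : \sum_(d < N | B d) c = K%:R * c.
Proof.
have e := sumr_const [pred i : 'I_N | B i] c; rewrite -mulr_natl in e.
rewrite /K /digit_norm -e.
by apply: eq_bigl => i; rewrite inE.
Qed.

Lemma sum_eq (f : 'I_N -> R) c : (forall d, B d -> f d <= c) ->
  \sum_(d < N | B d) f d = K%:R * c -> forall d, B d -> f d = c.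
Proof.
move=> hf hs d Bd.
have h0 : \sum_(d < N | B d) (c - f d) = 0 by rewrite sumrB hs sum_const subrr.
have hF : forall i, B i -> 0 <= c - f i by move=> i Bi; rewrite subr_ge0 hf.
have := Num.Theory.psumr_eq0P hF h0 Bd.
by move=> /eqP; rewrite subr_eq0 => /eqP.
Qed.

Lemma other_digit v : exists2 d : 'I_N, B d & val d != v.
Proof.
apply: contrapT => H0.
have hall : forall d : 'I_N, B d -> val d = v.
  move=> d Bd; apply/eqP; apply: contrapT => hn; apply: H0; exists d => //; exact/negP.
have : (K <= 1)%N.
  apply/card_le1_eqP => x y; rewrite !inE => Bx By.
  by apply: val_inj; rewrite (hall _ Bx) (hall _ By).
by rewrite leqNgt (leq_trans _ K2).
Qed.


Lemma sum_eq' (f : 'I_N -> R) c : (forall d, B d -> c <= f d) ->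
  \sum_(d < N | B d) f d = K%:R * c -> forall d, B d -> f d = c.
Proof.
move=> hf hs d Bd.
have h0 : \sum_(d < N | B d) (f d - c) = 0 by rewrite sumrB hs sum_const subrr.
have hF : forall i, B i -> 0 <= f i - c by move=> i Bi; rewrite subr_ge0 hf.
have := Num.Theory.psumr_eq0P hF h0 Bd.
by move=> /eqP; rewrite subr_eq0 => /eqP.
Qed.

Lemma G_step r : 1 <= r -> G (r + 1) = G r.
Proof.
move=> r1.
have [d0 Bd0 hd0] := other_digit N.-1.
have hd : (d0 : nat)%:R <= N%:R - 2 :> R.
  have : ((d0 : nat).+2 <= N)%N.
    have := ltn_ord d0; move/eqP: hd0 => /= hd0; lia.
  by rewrite -(ler_nat R) -addn2 natrD => h; lra.
have he : forall d : 'I_N, B d -> G (N%:R * r - (d : nat)%:R) = G r.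
  apply: sum_eq'; last by rewrite -G_rec mulrC.
  move=> d _; apply: Gmono.
  have : (d : nat)%:R <= N%:R - 1 :> R by rewrite lerBrDr natr1 ler_nat.
  have : 1 <= N%:R :> R by rewrite ler1n; apply: leq_trans N2'.
  nra.
apply/eqP; rewrite eq_le; apply/andP; split; last by apply: Gmono; lra.
rewrite -(he d0 Bd0); apply: Gmono.
have : 2 <= N%:R :> R by rewrite ler_nat N2'.
nra.
Qed.

Lemma H_step r : r <= 0 -> H (r - 1) = H r.
Proof.
move=> r0.
have [d1 Bd1 hd1] := other_digit 0.
have hd : 1 <= (d1 : nat)%:R :> R by rewrite ler1n lt0n.
have he : forall d : 'I_N, B d -> H (N%:R * r - (d : nat)%:R) = H r.
  apply: sum_eq; last by rewrite -H_rec mulrC.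
  move=> d _; apply: Hmono.
  have : 0 <= (d : nat)%:R :> R by [].
  have : 1 <= N%:R :> R by rewrite ler1n; apply: leq_trans N2'.
  nra.
apply/eqP; rewrite eq_le; apply/andP; split; first by apply: Hmono; lra.
rewrite -(he d1 Bd1); apply: Hmono.
have : 1 <= N%:R :> R by rewrite ler1n; apply: leq_trans N2'.
nra.
Qed.

Lemma G_const k : G (1 + k%:R) = G 1.
Proof. elim: k => [|k IH]; first by rewrite addr0. by rewrite -natr1 addrA G_step // lerDl. Qed.

Lemma H_const k : H (- k%:R) = H 0.
Proof.
elim: k => [|k IH]; first by rewrite oppr0.
by rewrite -natr1 opprD H_step // oppr_le0.
Qed.

Lemma m_oc a b : a <= b -> m [set z | a < z <= b] = G b - G a.
Proof.
move=> ab.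
have e : Le b = Le a `|` [set z | a < z <= b].
  apply/seteqP; split => z /=.
    by move=> zb; case: (leP z a) => za; [left|right; apply/andP].
  by case=> [za|/andP[_ //]]; exact: le_trans za ab.
have mS : measurable [set z : R | a < z <= b].
  by rewrite -set_itvoc; exact: measurable_itv.
rewrite /G e m_add //; first by ring.
- exact: mLe.
- by apply/seteqP; split => z //= [za /andP[az _]]; have := lt_le_trans az za; rewrite ltxx.
Qed.

Lemma m_co a b : a <= b -> m [set z | a <= z < b] = H b - H a.
Proof.
move=> ab.
have e : Lt b = Lt a `|` [set z | a <= z < b].
  apply/seteqP; split => z /=.
    by move=> zb; case: (ltP z a) => za; [left|right; apply/andP].
  by case=> [za|/andP[_ //]]; exact: lt_le_trans za ab.
have mS : measurable [set z : R | a <= z < b].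
  by rewrite -set_itvco; exact: measurable_itv.
rewrite /H e m_add //; first by ring.
- exact: mLt.
- by apply/seteqP; split => z //= [za /andP[az _]]; have := le_lt_trans az za; rewrite ltxx.
Qed.

Lemma m_null (F : (set R)^nat) S : (forall k, measurable (F k) /\ m (F k) = 0) ->
  measurable S -> S `<=` \bigcup_k F k -> m S = 0.
Proof.
move=> hF mS SF.
have hn : forall k, mu.-negligible (F k).
  move=> k; have [mF mF0] := hF k; exists (F k); split => //.
  by rewrite mE // mF0.
have [A [mA muA SA]] := negligible_bigcup hn.
apply/eqP; rewrite eq_le m_ge0 // andbT.
have : m A = 0 by rewrite /m muA.
move=> <-; apply: m_le => //; exact: subset_trans SF SA.
Qed.

Lemma m_gt1 : m [set z | 1 < z] = 0.
Proof.
apply: (@m_null (fun k => [set z | 1 < z <= 1 + k%:R])).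
- move=> k; split; first by rewrite -set_itvoc; exact: measurable_itv.
  by rewrite m_oc ?G_const ?subrr // lerDl.
- by rewrite -set_itvoy; exact: measurable_itv.
- move=> z /= z1; exists (Num.trunc z) => //=; rewrite z1 /=.
  have := truncnS_gt z; rewrite -natr1; lra.
Qed.

Lemma m_lt0 : m [set z | z < 0] = 0.
Proof.
apply: (@m_null (fun k => [set z | - k%:R <= z < 0])).
- move=> k; split; first by rewrite -set_itvco; exact: measurable_itv.
  by rewrite m_co ?H_const ?subrr // oppr_le0.
- by rewrite -set_itvNyo; exact: measurable_itv.
- move=> z /= z0; exists (Num.trunc (- z)).+1 => //=; rewrite z0 andbT.
  have := truncnS_gt (- z); lra.
Qed.

Lemma G_hi y : 1 <= y -> G y = 1.
Proof.
move=> y1.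
have e : setT = Le y `|` [set z | y < z].
  by apply/seteqP; split => z //= _; case: (leP z y) => h; [left|right].
have mS : measurable [set z : R | y < z] by rewrite -set_itvoy; exact: measurable_itv.
have := m_setT; rewrite e m_add //; last first.
- by apply/seteqP; split => z //= [zy yz]; have := lt_le_trans yz zy; rewrite ltxx.
- exact: mLe.
have : m [set z | y < z] <= 0.
  rewrite -m_gt1; apply: m_le => //; first by rewrite -set_itvoy; exact: measurable_itv.
  by move=> z /= yz; exact: le_lt_trans y1 yz.
have := m_ge0 mS; rewrite /G; lra.
Qed.

Lemma G_lo y : y < 0 -> G y = 0.
Proof.
move=> y0; apply/eqP; rewrite eq_le; have /andP[-> _] := G01 y; rewrite andbT.
rewrite -m_lt0; apply: m_le; first exact: mLe.
  by rewrite -set_itvNyo; exact: measurable_itv.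
by move=> z /= zy; exact: le_lt_trans zy y0.
Qed.

Lemma cdf_G x : 0 <= x -> cantor_cdf mu x = G x.
Proof.
move=> x0; rewrite /cantor_cdf -/(m _).
have e : Le x = `[0, x]%classic `|` [set z | z < 0].
  rewrite set_itvcc; apply/seteqP; split => z /=.
    by move=> zx; case: (leP 0 z) => h; [left; apply/andP; split|right].
  by case=> [/andP[_ //]|z0]; apply: ltW; exact: lt_le_trans z0 x0.
have mS : measurable [set z : R | z < 0] by rewrite -set_itvNyo; exact: measurable_itv.
have dis : `[0, x]%classic `&` [set z : R | z < 0] = set0.
  rewrite set_itvcc; apply/seteqP; split => z //= [/andP[z0 _] zn].
  by have := le_lt_trans z0 zn; rewrite ltxx.
by rewrite /G e (m_add (measurable_itv _) mS dis) m_lt0 addr0.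
Qed.

End Meas.



Section Bridge.
Variables (R : realType) (N : nat) (B : 'I_N -> bool) (mu : probability R R).
Hypothesis hv : valid_digits B.
Hypothesis hmu : is_cantor_measure B mu.
Let K := digit_norm B.

Lemma sum_card (P : pred 'I_N) :
  \sum_(d < N | B d) (P d)%:R = #|[pred d | B d && P d]|%:R :> R.
Proof.
rewrite (eq_bigr (fun d => if P d then 1 else 0)); last by move=> d _; case: (P d).
rewrite -big_mkcondr.
have e := sumr_const [pred d : 'I_N | B d && P d] (1 : R); rewrite -mulr_natl mulr1 in e.
rewrite -e; apply: eq_bigl => i; by rewrite inE.
Qed.

Lemma card_eqa a : #|[pred d : 'I_N | B d && (val d == a)]| = Bn B a.
Proof.
case: (boolP (Bn B a)) => [/BnP[e ea Be]|nB].
  rewrite (@eq_card _ _ (pred1 e)) ?card1 // => d; rewrite !inE -ea.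
  apply/idP/idP => [/andP[_ /eqP /val_inj -> //]|/eqP ->]; by rewrite Be eqxx.
apply: eq_card0 => d; rewrite !inE; apply/negP => /andP[Bd /eqP da].
by move: nB; rewrite -da BnE Bd.
Qed.

Lemma Grec_good y : good y ->
  G mu y = ((rk B (dig N y))%:R + (Bn B (dig N y))%:R * G mu (T N y)) / K%:R.
Proof.
move=> gy.
have N2 := N2' hv.
have [_ _ /andP[h1 h2]] := good_T N2 gy.
set a := dig N y in h1 h2 *.
have K0 : K%:R != 0 :> R by rewrite pnatr_eq0 -lt0n; apply: leq_trans (K2 hv).
apply: (mulIf K0); rewrite divfK // (G_rec hv hmu).
rewrite (eq_bigr (fun d : 'I_N => ((val d < a)%N)%:R + ((val d == a))%:R * G mu (T N y))).
  rewrite big_split /= -mulr_suml !sum_card card_eqa.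
  by congr (_%:R + _); apply: eq_card => d; rewrite !inE.
move=> d _.
have e1 : (true%:R : R) = 1 by [].
have e0 : (false%:R : R) = 0 by [].
case: (ltngtP (val d) a) => [lt|gt|eq]; rewrite ?e0 ?e1.
- rewrite mul0r addr0 (G_hi hv hmu) //.
  have : ((val d).+1)%:R <= a%:R :> R by rewrite ler_nat.
  rewrite -natr1; lra.
- rewrite mul0r addr0 (G_lo hv hmu) //.
  have : (a.+1)%:R <= (val d)%:R :> R by rewrite ler_nat.
  lra.
- by rewrite /T eq mul1r add0r.
Qed.

End Bridge.

Theorem lemma2p7 (R : realType) (N : nat) (B : 'I_N -> bool)
  (C : set R) (mu : probability R R) :
  valid_digits B ->
  is_cantor_set B C ->
  is_cantor_measure B mu ->
  forall x : R, 0 <= x <= 1 -> irrational x ->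
  (C x <-> irrational (cantor_cdf mu x)).
Proof.
move=> hv hC hmu x /andP[x0 x1] xi.
have N2 := N2' hv.
have gx : good x.
  split => //; apply/andP; split.
    rewrite lt_neqAle x0 andbT; apply/negP => /eqP e; apply: xi; rewrite -e.
    exact: rational_nat 0.
  rewrite lt_neqAle x1 andbT; apply/negP => /eqP e; apply: xi; rewrite e.
  exact: rational_int 1.
rewrite (cdf_G hv hmu x0) (C_iff N2 hC gx).
apply: dyn_main => //.
- exact: leq_trans (K2 hv).
- exact: G01.
- exact: Grec_good.
Qed.
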